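(* Let $n\ge 2$ and let $S$ be an admissible peak set in $S^B_n$. Then \[ \min\{d_H(\sigma,\rho) : \sigma,\rho\in P^B(S;n),\ \sigma\neq\rho\} =\min\{d_\ell(\sigma,\rho) : \sigma,\rho\in P^B(S;n),\ \sigma\neq\rho\} =\min\{d_W(\sigma,\rho) : \sigma,\rho\in P^B(S;n),\ \sigma\neq\rho\}=1. \]
   Context: $S^B_n$ is the set of bijections $\sigma$ of $\{-n,\dots,-1,1,\dots,n\}$ with $\sigma(-i)=-\sigma(i)$ for all $i$, with multiplication given by composition; a signed permutation is written in one-line notation $\sigma(1)\cdots\sigma(n)$. A signed permutation $\sigma$ has a peak at index $i\in\{2,\dots,n-1\}$ if $\sigma(i-1)<\sigma(i)>\sigma(i+1)$ (usual order on integers). $Peak(\sigma)$ is the set of indices where $\sigma$ has a peak, and for $S\subseteq[n]$, $P^B(S;n)=\{\sigma\in S^B_n : Peak(\sigma)=S\}$. $S$ is an admissible peak set if $P^B(S;n)\neq\emptyset$ (equivalently, $S\subseteq\{2,\dots,n-1\}$ and $S$ contains no two consecutive integers). For $\sigma,\rho\in S^B_n$: $d_H(\sigma,\rho)=|\{i\in[n] : \sigma(i)\neq\rho(i)\}|$; $d_\ell(\sigma,\rho)=\max\{|\sigma(i)-\rho(i)| : i\in[n]\}$; $d_W(\sigma,\rho)=\ell_B(\rho^{-1}\sigma)$, where $\ell_B(\gamma)$ is the minimum number of factors in an expression of $\gamma$ as a product of the Coxeter generators $s_0^B,\dots,s_{n-1}^B$; here $s_0^B$ swaps $1$ and $-1$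 and fixes all other values, and for $1\le i<n$, $s_i^B$ swaps $i$ with $i+1$ and $-i$ with $-(i+1)$, fixing everything else. *)

(* Defs.v *)
(* Signed permutations of size n are represented as functions
   int -> int that restrict to a bijection of D_n = {-n..-1,1..n} commuting
   with negation; values outside D_n are irrelevant (equality = agreement on D_n). *)
From mathcomp Require Import all_boot all_order all_algebra.
Set Implicit Arguments. Unset Strict Implicit. Unset Printing Implicit Defensive.
Import Order.TTheory GRing.Theory Num.Theory.
Local Open Scope ring_scope.

Definition sdom (n : nat) (x : int) : bool := (x != 0) && (absz x <= n)%N.

Definition is_signed_perm (n : nat) (s : int -> int) : Prop :=
  [/\ forall x, sdom n x -> sdom n (s x),
      forall x y, sdom n x -> sdom n y -> s x = s y -> x = y,
      forall y, sdom n y -> exists2 x, sdom n x & s x = y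
    & forall x, sdom n x -> s (- x) = - s x].

Definition sp_eq (n : nat) (s r : int -> int) : Prop :=
  forall x, sdom n x -> s x = r x.

Definition is_peak (n : nat) (s : int -> int) (i : nat) : bool :=
  [&& (1 < i < n)%N, s (Posz i.-1) < s (Posz i) & s (Posz i.+1) < s (Posz i)].

Definition PB (n : nat) (S : pred nat) (s : int -> int) : Prop :=
  is_signed_perm n s /\ forall i : nat, S i = is_peak n s i.

Definition dH (n : nat) (s r : int -> int) : nat :=
  count (fun i : nat => s (Posz i) != r (Posz i)) (iota 1 n).

Definition dL (n : nat) (s r : int -> int) : nat :=
  (\max_(i <- iota 1 n) absz (s (Posz i) - r (Posz i)))%N.

Definition domlist (n : nat) : seq int :=
  [seq Posz i | i <- iota 1 n] ++ [seq - Posz i | i <- iota 1 n].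
Definition sinv (n : nat) (r : int -> int) (y : int) : int :=
  head y [seq x <- domlist n | r x == y].

Definition gen (i : nat) : int -> int :=
  if i == 0%N then
    fun x => if x == 1 then -1 else if x == -1 then 1 else x
  else
    fun x => if x == Posz i then Posz i + 1
             else if x == Posz i + 1 then Posz i
             else if x == - Posz i then - (Posz i + 1)
             else if x == - (Posz i + 1) then - Posz i
             else x.

Definition word_fun (n : nat) (w : seq 'I_n) : int -> int :=
  foldr (fun (i : 'I_n) f => fun x => gen (nat_of_ord i) (f x)) id w.

Definition coxeter_length (n : nat) (g : int -> int) (k : nat) : Prop :=
  (exists w : seq 'I_n, size w = k /\ sp_eq n g (word_fun w))
  /\ forall w : seq 'I_n, sp_eq n g (word_fun w) -> (k <= size w)%N.

Definition dW_is (n : nat) (s r : int -> int) (k : nat) : Prop :=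
  coxeter_length n (fun x => sinv n r (s x)) k.

Definition is_min (P : nat -> Prop) (m : nat) : Prop :=
  P m /\ forall k, P k -> (m <= k)%N.

(* Main.v *)
Require Import Defs.
From mathcomp Require Import all_boot all_order all_algebra.
From mathcomp Require Import zify.
Set Implicit Arguments. Unset Strict Implicit. Unset Printing Implicit Defensive.
Import Order.TTheory GRing.Theory Num.Theory.
Local Open Scope ring_scope.

Definition sgS (S : pred nat) (c : int) (k : nat) : int :=
  if k == 1%N then c else if S k then 1 else -1.
Definition sig (S : pred nat) (c : int) (x : int) : int := sgS S c (absz x) * x.

Lemma sgS_pm S c k : c = 1 \/ c = -1 -> sgS S c k = 1 \/ sgS S c k = -1.
Proof. rewrite /sgS => hc; case: (k == 1%N) => //; case: (S k); auto. Qed.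

Lemma sig_abs S c x : c = 1 \/ c = -1 -> absz (sig S c x) = absz x.
Proof. move=> hc; rewrite /sig; case: (sgS_pm S (absz x) hc) => ->; lia. Qed.

Lemma sig_sig S c x : c = 1 \/ c = -1 -> sig S c (sig S c x) = x.
Proof.
move=> hc; rewrite [in LHS]/sig sig_abs // /sig.
case: (sgS_pm S (absz x) hc) => ->; lia.
Qed.

Lemma sig_signed n S c : c = 1 \/ c = -1 -> is_signed_perm n (sig S c).
Proof.
move=> hc; split.
- by move=> x; rewrite /sdom -!absz_eq0 sig_abs.
- move=> x y _ _ E.
  have Ha : absz x = absz y by rewrite -(sig_abs S x hc) E sig_abs.
  move: E; rewrite /sig Ha; case: (sgS_pm S (absz y) hc) => ->; lia.
- move=> y Hy; exists (sig S c y); last exact: sig_sig.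
  by move: Hy; rewrite /sdom -!absz_eq0 sig_abs.
- move=> x _; rewrite /sig abszN; lia.
Qed.

Lemma sig_ge2 S c (k : nat) : (2 <= k)%N ->
  sig S c (Posz k) = if S k then Posz k else - Posz k.
Proof.
move=> hk; rewrite /sig /sgS /=.
have -> : (k == 1%N) = false by apply/negbTE; lia.
by case: (S k); lia.
Qed.

Lemma sig_bd S c (k : nat) : c = 1 \/ c = -1 ->
  - Posz k <= sig S c (Posz k) <= Posz k.
Proof. move=> hc; rewrite /sig; case: (sgS_pm S k hc) => ->; apply/andP; split; lia. Qed.

Lemma sig_peak n (S : pred nat) c : c = 1 \/ c = -1 ->
  (forall i, S i -> (1 < i < n)%N) -> (forall i, S i -> ~~ S i.+1) ->
  forall i, S i = is_peak n (sig S c) i.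
Proof.
move=> hc H1 H2 i; rewrite /is_peak.
case Hi: (1 < i < n)%N; last first.
  by apply/negbTE/negP => /H1; rewrite Hi.
move/andP: Hi => [Hi1 Hi2] /=.
have hb := sig_bd S i.-1 hc.
rewrite (sig_ge2 S c Hi1) (@sig_ge2 S c i.+1); last lia.
case Si: (S i).
- have -> : S i.+1 = false by apply/negbTE/H2.
  symmetry; apply/andP; split; lia.
- symmetry; apply/negbTE/negP => /andP[h _]; lia.
Qed.

Lemma peak_same n s r :
  (forall i j : nat, (0 < i <= n)%N -> (0 < j <= n)%N ->
     (s (Posz i) < s (Posz j)) = (r (Posz i) < r (Posz j))) ->
  forall i, is_peak n s i = is_peak n r i.
Proof.
move=> H i; rewrite /is_peak; case Hi: (1 < i < n)%N => //=.
move/andP: Hi => [Hi1 Hi2].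
by rewrite !H //; apply/andP; split; lia.
Qed.

Ltac gc x := case: (eqVneq x (Posz 1)) => ?; case: (eqVneq x (Posz 1 + 1)) => ?;
  case: (eqVneq x (- Posz 1)) => ?; case: (eqVneq x (- (Posz 1 + 1))) => ? /=.

Lemma gen1_ord x y : (x = 1 -> y <> 2) -> (x = 2 -> y <> 1) ->
  (x = -1 -> y <> -2) -> (x = -2 -> y <> -1) ->
  (x < y) = (gen 1 x < gen 1 y).
Proof.
move=> H1 H2 H3 H4; rewrite /gen /=.
by repeat (case: eqP => ?); apply/idP/idP; lia.
Qed.

Lemma gen1_inv x : gen 1 (gen 1 x) = x.
Proof. rewrite /gen /=. gc x; repeat (case: eqP => ?); lia. Qed.

Lemma gen1_odd x : gen 1 (- x) = - gen 1 x.
Proof. rewrite /gen /=. gc x; repeat (case: eqP => ?); lia. Qed.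

Lemma gen1_sdom n x : (2 <= n)%N -> sdom n x -> sdom n (gen 1 x).
Proof.
rewrite /sdom /gen /= => hn /andP[h1 h2].
by gc x; (try apply/andP); (try split); lia.
Qed.

Lemma gen1_dist x : (absz (x - gen 1 x) <= 1)%N.
Proof. rewrite /gen /=. by gc x; lia. Qed.

Lemma gen0_sdom n x : sdom n x -> sdom n (gen 0 x).
Proof.
rewrite /sdom /gen /= => /andP[h1 h2].
by case: (eqVneq x 1) => ? /=; [|case: (eqVneq x (-1)) => ? /=]; (try apply/andP); (try split); lia.
Qed.

Lemma comp_signed n s g : is_signed_perm n s ->
  (forall x, sdom n x -> sdom n (g x)) -> (forall x, g (g x) = x) ->
  (forall x, g (- x) = - g x) -> is_signed_perm n (fun x => g (s x)).
Proof.
move=> [s1 s2 s3 s4] g1 g2 g3; split.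
- by move=> x hx; apply/g1/s1.
- move=> x y hx hy E; apply: s2 => //.
  by rewrite -(g2 (s x)) E g2.
- move=> y hy; have [x hx E] := s3 _ (g1 _ hy).
  by exists x => //; rewrite E g2.
- by move=> x hx; rewrite s4 // g3.
Qed.

Lemma dom_mem n x : sdom n x -> x \in domlist n.
Proof.
rewrite /sdom /domlist mem_cat => /andP[h0 hn].
have [x0|x0] := leP 0 x.
- apply/orP; left; apply/mapP; exists (absz x); first by rewrite mem_iota; lia.
  lia.
- apply/orP; right; apply/mapP; exists (absz x); first by rewrite mem_iota; lia.
  lia.
Qed.

Lemma mem_dom n x : x \in domlist n -> sdom n x.
Proof.
rewrite /domlist mem_cat => /orP[]/mapP[i]; rewrite mem_iota => hi ->;
  rewrite /sdom; apply/andP; split; lia.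
Qed.

Lemma sinvK n r x : is_signed_perm n r -> sdom n x -> sinv n r (r x) = x.
Proof.
case=> _ Hinj _ _ Hx; rewrite /sinv.
have : x \in [seq z <- domlist n | r z == r x] by rewrite mem_filter eqxx dom_mem.
case E: [seq z <- domlist n | r z == r x] => [|z l] //= _.
have : z \in [seq z <- domlist n | r z == r x] by rewrite E mem_head.
rewrite mem_filter => /andP[/eqP Hz /mem_dom Hzd].
exact: Hinj.
Qed.

Lemma sinvE n r y : is_signed_perm n r -> sdom n y -> r (sinv n r y) = y.
Proof.
move=> Hr Hy; have [_ _ s3 _] := Hr.
have [x hx <-] := s3 _ Hy; by rewrite sinvK.
Qed.

Lemma eq_from_pos n s r : is_signed_perm n s -> is_signed_perm n r ->
  (forall i : nat, (0 < i <= n)%N -> s (Posz i) = r (Posz i)) -> sp_eq n s r.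
Proof.
move=> [_ _ _ Hs] [_ _ _ Hr] H x Hx; move: (Hx); rewrite /sdom => /andP[h0 hn].
have [x0|x0] := leP 0 x.
- have -> : x = Posz (absz x) by lia.
  apply: H; lia.
- have -> : x = - Posz (absz x) by lia.
  have hd : sdom n (Posz (absz x)) by rewrite /sdom; apply/andP; split; lia.
  rewrite Hs // Hr // H //; lia.
Qed.

Lemma bigmax_le1 (l : seq nat) (F : nat -> nat) :
  (forall i, (F i <= 1)%N) -> (\max_(i <- l) F i <= 1)%N.
Proof.
move=> H; elim: l => [|a l IH]; first by rewrite big_nil.
by rewrite big_cons geq_max H IH.
Qed.

Theorem theorem4p6 (n : nat) (S : pred nat) :
  (2 <= n)%N ->
  (exists s, PB n S s) ->
  [/\ is_min (fun d => exists s r, [/\ PB n S s, PB n S r, ~ sp_eq n s r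
                                      & d = dH n s r]) 1%N,
      is_min (fun d => exists s r, [/\ PB n S s, PB n S r, ~ sp_eq n s r
                                      & d = dL n s r]) 1%N
    & is_min (fun d => exists s r, [/\ PB n S s, PB n S r, ~ sp_eq n s r
                                      & dW_is n s r d]) 1%N].
Proof.
move=> Hn [s0 [_ Hs0]].
have HS1 : forall i, S i -> (1 < i < n)%N.
  by move=> i; rewrite Hs0 => /andP[].
have HS2 : forall i, S i -> ~~ S i.+1.
  move=> i; rewrite !Hs0 /is_peak => /and3P[_ _ h1]; apply/negP => /and3P[_ h2 _].
  move: h1 h2 => /=; lia.
have PBs : forall c, c = 1 \/ c = -1 -> PB n S (sig S c).
  by move=> c hc; split; [exact: sig_signed | exact: sig_peak].
have hp : (1:int) = 1 \/ (1:int) = -1 by left.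
have hm : (-1:int) = 1 \/ (-1:int) = -1 by right.
have sd1 : sdom n 1 by rewrite /sdom; apply/andP; split; lia.
have sig1 : forall c, sig S c 1 = c by move=> c; rewrite /sig /sgS /= mulr1.
have neq1 : ~ sp_eq n (sig S 1) (sig S (-1)).
  by move=> H; have := H 1 sd1; rewrite !sig1; lia.
have Hio : iota 1 n = 1%N :: iota 2 n.-1 by case: (n) Hn.
split; split.
- exists (sig S 1), (sig S (-1)); split; [exact: PBs hp | exact: PBs hm | exact: neq1 |].
  rewrite /dH Hio /= add1n; congr (_.+1).
  symmetry; apply/eqP; rewrite -leqn0 leqNgt -has_count; apply/hasPn => i.
  rewrite mem_iota => hi /=; rewrite !sig_ge2 ?negbK //; lia.
- move=> k [s [r [[Hs _] [Hr _] Hne ->]]].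
  rewrite lt0n; apply/negP => /eqP H0; apply: Hne.
  apply: eq_from_pos => // i hi; apply/eqP.
  move: H0; rewrite /dH => /eqP; rewrite -leqn0 leqNgt -has_count => /hasPn/(_ i).
  rewrite mem_iota => /(_ ltac:(lia)); by rewrite negbK.
- pose c0 : int := if S 2 then -1 else 1.
  have hc0 : c0 = 1 \/ c0 = -1 by rewrite /c0; case: (S 2); auto.
  have s2v : sig S c0 (Posz 2) = if S 2 then 2 else -2 by rewrite sig_ge2.
  have habs : forall i : nat, absz (sig S c0 (Posz i)) = i by move=> i; rewrite sig_abs.
  exists (sig S c0), (fun x => gen 1 (sig S c0 x)); split; first exact: PBs hc0.
  + split.
    * apply: comp_signed; first exact: sig_signed.
      -- by move=> x; apply: gen1_sdom.
      -- exact: gen1_inv.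
      -- exact: gen1_odd.
    * move=> i; rewrite (sig_peak hc0 HS1 HS2); apply: peak_same => a b ha hb.
      have ha' := habs a; have hb' := habs b.
      have s1v := sig1 c0.
      apply: gen1_ord => hx hy; rewrite hx hy /= in ha' hb';
        rewrite -ha' -hb' in hx hy; move: hx hy s2v s1v; rewrite /c0;
        case: (S 2) => -> -> /=; lia.
  + move=> H; have := H 1 sd1; rewrite sig1 /gen /c0 /=.
    by case: (S 2).
  + rewrite /dL Hio big_cons sig1.
    have -> : absz (c0 - gen 1 c0) = 1%N by rewrite /c0 /gen; case: (S 2).
    symmetry; apply/maxn_idPl; apply: bigmax_le1 => i; exact: gen1_dist.
- move=> k [s [r [[Hs _] [Hr _] Hne ->]]].
  rewrite lt0n; apply/negP => /eqP H0; apply: Hne.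
  apply: eq_from_pos => // i hi; apply/eqP.
  have := @leq_bigmax_seq nat (iota 1 n) xpredT
    (fun i : nat => absz (s (Posz i) - r (Posz i))) i.
  rewrite mem_iota => /(_ ltac:(lia) isT); move: H0; rewrite /dL => ->.
  rewrite leqn0 absz_eq0 subr_eq0 //.
- exists (sig S 1), (sig S (-1)); split; [exact: PBs hp | exact: PBs hm | exact: neq1 |].
  have key : forall x, sdom n x -> sinv n (sig S (-1)) (sig S 1 x) = gen 0 x.
    move=> x hx.
    have -> : sig S 1 x = sig S (-1) (gen 0 x).
      rewrite /sig /sgS /gen /=.
      case: (x =P 1) => [->|h1] /=; first by [].
      case: (x =P -1) => [->|h2] /=; first by [].
      have -> : (absz x == 1%N) = false by apply/negbTE; lia.
      by [].
    by rewrite sinvK //; [exact: sig_signed | exact: gen0_sdom].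
  split.
  + exists [:: Ordinal (ltn_trans (ltnSn 0) Hn)]; split => // x hx.
  + move=> [|a w] // Hw; have := Hw 1 sd1; rewrite key //= /gen /=.
- move=> k [s [r [[Hs _] [Hr _] Hne Hk]]].
  rewrite lt0n; apply/negP => /eqP H0; apply: Hne; move: Hk; rewrite H0.
  move=> [[w [/size0nil -> Hw]] _] x hx.
  have [s1 _ _ _] := Hs.
  by rewrite -(sinvE Hr (s1 _ hx)) Hw.
Qed.
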